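(* Let $\mathcal A$ be a small abelian category. The map $$\gamma_{0,\mathcal A}:\mathsf{Cob}_0(\mathcal A)\to K_0(\mathcal A),\qquad [M]\mapsto\sum_{b\in M}s(b)[X_b],$$ is a well-defined isomorphism of abelian groups.
   Context: $K_0(\mathcal A)$ is the abelian group generated by symbols $[X]$ for $X\in\mathrm{Ob}(\mathcal A)$, with relations $[X_2]=[X_1]+[X_3]$ for every short exact sequence $0\to X_1\to X_2\to X_3\to0$. An $\mathcal A$-decorated 0-foam $M$ is a finite set of points $b$, each with a sign $s(b)\in\{\pm1\}$ and an object $X_b\in\mathcal A$; $-M$ reverses all signs. An $\mathcal A$-decorated 1-foam is the realization of a finite oriented graph. Multiple edges, loops and vertexless circles are allowed. Its interior vertices are trivalent and are either ''in'' vertices (two edges in, one out) or ''out'' vertices (one in, two out). At each vertex the two edges of equal orientation type are thin and the third is thick. The foam carries a flat connection with fibers objects of $\mathcal A$: parallel transport along edges gives isomorphisms of fibers, and circles carry monodromy automorphisms. At each vertex the two thin edges are ordered (first, second), and a short exact sequence $0\to X_{\mathrm{first}}\to X_{\mathrm{thick}}\to X_{\mathrm{second}}\to0$ of nearby fibers is fixed. A boundary point has the fiber there and sign $+$ if the edge points toward it, $-$ otherwise. A 1-foam $U$ is a cobordism from $M_0$ to $M_1$ if $\partial U\cong M_1\sqcup(-M_0)$. $\mathsf{Cob}_0(\mathcal A)$ is the set of $\mathcal A$-decorated 0-foams modulo the equivalence relation generated by cobordism. It is an abelian group under disjoint union. *)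

(* Defs.v *)
From HB Require Import structures.
From mathcomp Require Import all_boot all_algebra.
From mathcomp Require Import boolp.
From Stdlib Require Import Relations.
Set Implicit Arguments. Unset Strict Implicit. Unset Printing Implicit Defensive.
Import GRing.Theory.
Local Open Scope ring_scope.

Record PreAddCat := {
  Obj : Type;
  Hom : Obj -> Obj -> zmodType;
  comp : forall X Y Z : Obj, Hom Y Z -> Hom X Y -> Hom X Z;
  idm : forall X : Obj, Hom X X;
  compA : forall W X Y Z (f : Hom Y Z) (g : Hom X Y) (h : Hom W X),
      comp f (comp g h) = comp (comp f g) h;
  comp1m : forall X Y (f : Hom X Y), comp (idm Y) f = f;
  compm1 : forall X Y (f : Hom X Y), comp f (idm X) = f;
  compDl : forall X Y Z (f g : Hom Y Z) (h : Hom X Y),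
      comp (f + g) h = comp f h + comp g h;
  compDr : forall X Y Z (f : Hom Y Z) (g h : Hom X Y),
      comp f (g + h) = comp f g + comp f h
}.
Arguments comp {p X Y Z}.
Arguments idm {p}.
Arguments Hom p X Y : clear implicits.

Section Cat.
Variable C : PreAddCat.

Definition is_kernel (X Y K : Obj C) (f : Hom C X Y) (k : Hom C K X) : Prop :=
  comp f k = 0 /\
  forall W (g : Hom C W X), comp f g = 0 -> exists! u : Hom C W K, comp k u = g.

Definition is_cokernel (X Y Q : Obj C) (f : Hom C X Y) (c : Hom C Y Q) : Prop :=
  comp c f = 0 /\
  forall W (g : Hom C Y W), comp g f = 0 -> exists! u : Hom C Q W, comp u c = g.

Definition mono (X Y : Obj C) (f : Hom C X Y) : Prop :=
  forall W (g h : Hom C W X), comp f g = comp f h -> g = h.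

Definition epi (X Y : Obj C) (f : Hom C X Y) : Prop :=
  forall W (g h : Hom C Y W), comp g f = comp h f -> g = h.

Definition isIso (X Y : Obj C) (f : Hom C X Y) : Prop :=
  exists g : Hom C Y X, comp g f = idm X /\ comp f g = idm Y.

Definition isomorphic (X Y : Obj C) : Prop := exists f : Hom C X Y, isIso f.

Definition is_abelian : Prop :=
  (exists Z : Obj C, (forall X (f g : Hom C Z X), f = g) /\
                     (forall X (f g : Hom C X Z), f = g)) /\
  (forall X Y : Obj C, exists P (i1 : Hom C X P) (i2 : Hom C Y P)
        (p1 : Hom C P X) (p2 : Hom C P Y),
      [/\ comp p1 i1 = idm X, comp p2 i2 = idm Y, comp p1 i2 = 0,
          comp p2 i1 = 0 & comp i1 p1 + comp i2 p2 = idm P]) /\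
  (forall X Y (f : Hom C X Y), exists K (k : Hom C K X), is_kernel f k) /\
  (forall X Y (f : Hom C X Y), exists Q (c : Hom C Y Q), is_cokernel f c) /\
  (forall A X (m : Hom C A X), mono m -> exists Y (h : Hom C X Y), is_kernel h m) /\
  (forall X B (e : Hom C X B), epi e -> exists Y (h : Hom C Y X), is_cokernel h e).

Definition SES (X1 X2 X3 : Obj C) (f : Hom C X1 X2) (g : Hom C X2 X3) : Prop :=
  is_kernel g f /\ is_cokernel f g.

(* Elements of the free abelian group on Obj C are represented by formal
   finite sums  sum n_i [X_i]  (lists of (n_i, X_i)); coef gives the
   coefficient function (finitely supported). *)
Definition ind (A X : Obj C) : int := if pselect (A = X) then 1 else 0.
Definition coef (s : seq (int * Obj C)) (X : Obj C) : int :=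
  \sum_(p <- s) p.1 * ind p.2 X.

Record SESdata := { sX1 : Obj C; sX2 : Obj C; sX3 : Obj C;
  sf : Hom C sX1 sX2; sg : Hom C sX2 sX3; sP : SES sf sg }.

Definition relelt (d : SESdata) (X : Obj C) : int :=
  ind (sX2 d) X - ind (sX1 d) X - ind (sX3 d) X.

(* s and t have the same class in K_0: their difference lies in the subgroup
   generated by the relations *)
Definition K0eq (s t : seq (int * Obj C)) : Prop :=
  exists r : seq (int * SESdata),
    forall X, coef s X - coef t X = \sum_(q <- r) q.1 * relelt q.2 X.

Record Foam0 := { pt : finType; sgn : pt -> bool (* true = +1 *); obj : pt -> Obj C }.
Arguments sgn : clear implicits.
Arguments obj : clear implicits.

Definition negF0 (M : Foam0) : Foam0 :=
  {| pt := pt M; sgn := fun b => ~~ sgn M b; obj := obj M |}.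

Definition unionF0 (M N : Foam0) : Foam0 :=
  {| pt := (pt M + pt N)%type;
     sgn := fun b => match b with inl x => sgn M x | inr y => sgn N y end;
     obj := fun b => match b with inl x => obj M x | inr y => obj N y end |}.

Definition iso0 (M N : Foam0) : Prop :=
  exists phi : pt M -> pt N, bijective phi /\
    forall b, sgn N (phi b) = sgn M b /\ isomorphic (obj M b) (obj N (phi b)).

(* edge ends: (e, true) is the head of e, (e, false) its tail *)
Definition vends (E : eqType) (isin : bool) (f s t : E) : seq (E * bool) :=
  if isin then [:: (f, true); (s, true); (t, false)]
  else [:: (t, true); (f, false); (s, false)].

Record Foam1 := {
  fE : finType;   (* edges with endpoints (arcs, loops included) *)
  fV : finType;   (* interior (trivalent) vertices *)
  fCir : finType; (* vertexless circles *)
  efib : fE -> Obj C;  (* fiber along an edge (identified by parallel transport) *)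
  cfib : fCir -> Obj C;
  cmono : forall c, {f : Hom C (cfib c) (cfib c) | isIso f};  (* monodromy *)
  endpt : fE * bool -> option fV;  (* None = boundary point *)
  vin : fV -> bool;                (* true = "in" vertex, false = "out" vertex *)
  vfirst : fV -> fE; vsecond : fV -> fE; vthick : fV -> fE;
  vinc : forall v,
     uniq (vends (vin v) (vfirst v) (vsecond v) (vthick v)) /\
     forall x, (endpt x == Some v) = (x \in vends (vin v) (vfirst v) (vsecond v) (vthick v));
  vses : forall v, {f : Hom C (efib (vfirst v)) (efib (vthick v)) &
                    {g : Hom C (efib (vthick v)) (efib (vsecond v)) | SES f g}}
}.

Definition bdry (U : Foam1) : Foam0 :=
  {| pt := {x : fE U * bool | endpt x == None};
     sgn := fun x => (val x).2;
     obj := fun x => efib (val x).1 |}.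

Definition cobordism (M0 M1 : Foam0) : Prop :=
  exists U : Foam1, iso0 (bdry U) (unionF0 M1 (negF0 M0)).

Definition cob_eq : relation Foam0 := clos_refl_sym_trans Foam0 cobordism.

Definition gamma (M : Foam0) : seq (int * Obj C) :=
  [seq ((if sgn M b then 1 else -1 : int), obj M b) | b <- enum (pt M)].

End Cat.

(* Main.v *)
Require Import Defs.
From HB Require Import structures.
From mathcomp Require Import all_boot all_algebra.
From mathcomp Require Import boolp ring zify.
From Stdlib Require Import Relations.
Set Implicit Arguments. Unset Strict Implicit. Unset Printing Implicit Defensive.
Import GRing.Theory.
Local Open Scope ring_scope.

Section K.
Variable C : PreAddCat.
Implicit Types M N P W : Foam0 C.

Definition inK (f : Obj C -> int) := exists r : seq (int * SESdata C),
  forall X, f X = \sum_(q <- r) q.1 * relelt q.2 X.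

Lemma inK0 : inK (fun _ => 0).
Proof. by exists [::] => X; rewrite big_nil. Qed.

Lemma inK_ext f g : (forall X, f X = g X) -> inK f -> inK g.
Proof. by move=> E [r Hr]; exists r => X; rewrite -E. Qed.

Lemma inKD f g : inK f -> inK g -> inK (fun X => f X + g X).
Proof. by move=> [r1 H1] [r2 H2]; exists (r1 ++ r2) => X; rewrite big_cat /= H1 H2. Qed.

Lemma inKN f : inK f -> inK (fun X => - f X).
Proof.
move=> [r H]; exists (map (fun q => (- q.1, q.2)) r) => X.
by rewrite big_map H -sumrN; apply: eq_bigr => q _ /=; rewrite mulNr.
Qed.

Lemma inKB f g : inK f -> inK g -> inK (fun X => f X - g X).
Proof. by move=> Hf Hg; apply: inKD => //; apply: inKN. Qed.

Lemma inK_rel d : inK (relelt d).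
Proof. by exists [:: (1, d)] => X; rewrite big_seq1 mul1r. Qed.

Lemma inK_sum (I : finType) (F : I -> Obj C -> int) :
  (forall i, inK (F i)) -> inK (fun X => \sum_i F i X).
Proof.
move=> H.
suff: forall s, inK (fun X => \sum_(i <- s) F i X) by move/(_ (index_enum I)).
elim=> [|a s IH]; first by apply: inK_ext inK0 => X; rewrite big_nil.
by apply: inK_ext (inKD (H a) IH) => X; rewrite big_cons.
Qed.

Lemma inK_mul k f : inK f -> inK (fun X => k * f X).
Proof.
move=> [r H]; exists (map (fun q => (k * q.1, q.2)) r) => X.
by rewrite big_map H mulr_sumr; apply: eq_bigr => q _ /=; rewrite mulrA.
Qed.

Lemma comp0l (X Y Z : Obj C) (h : Defs.Hom C X Y) : Defs.comp (0 : Defs.Hom C Y Z) h = 0.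
Proof.
have := Defs.compDl (0 : Defs.Hom C Y Z) 0 h; rewrite addr0 -{1}(addr0 (Defs.comp 0 h)).
by move/addrI=> ->.
Qed.

Lemma comp0r (X Y Z : Obj C) (h : Defs.Hom C Y Z) : Defs.comp h (0 : Defs.Hom C X Y) = 0.
Proof.
have := Defs.compDr h (0 : Defs.Hom C X Y) 0; rewrite addr0 -{1}(addr0 (Defs.comp h 0)).
by move/addrI=> ->.
Qed.

Definition zeroobj (Z : Obj C) := (forall X (f g : Defs.Hom C Z X), f = g) /\
                     (forall X (f g : Defs.Hom C X Z), f = g).

Lemma ses_iso (Z X Y : Obj C) (f : Defs.Hom C X Y) (g : Defs.Hom C Y Z) :
  zeroobj Z -> isIso f -> SES f g.
Proof.
move=> [Z1 Z2] [fi [H1 H2]]; split; split.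
- exact: Z2.
- move=> W h _; exists (Defs.comp fi h); split.
    by rewrite Defs.compA H2 Defs.comp1m.
  move=> u Hu; rewrite -Hu Defs.compA H1 Defs.comp1m //.
- exact: Z2.
- move=> W h Hh; exists 0; split.
    rewrite comp0l -[h]Defs.compm1 -H2 Defs.compA Hh comp0l //.
  by move=> u _; apply: Z1.
Qed.

Lemma inK_iso (X Y : Obj C) : (exists Z, zeroobj Z) -> isomorphic X Y ->
  inK (fun V => ind X V - ind Y V).
Proof.
move=> [Z HZ] [f Hf].
pose g : Defs.Hom C Y Z := 0.
pose d := Build_SESdata (ses_iso g HZ Hf).
have Hid : isIso (idm Z) by exists (idm Z); rewrite Defs.comp1m.
pose d0 := Build_SESdata (ses_iso (idm Z) HZ Hid).
apply: inK_ext (inKN (inKD (inK_rel d) (inKN (inK_rel d0)))) => W.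
rewrite /relelt /=; ring.
Qed.

Definition sgi (b : bool) : int := if b then 1 else -1.

Lemma cgE (M : Foam0 C) X :
  coef (gamma M) X = \sum_(b : pt M) sgi (@sgn C M b) * ind (@obj C M b) X.
Proof. by rewrite /coef /gamma big_map big_enum; apply: eq_bigl. Qed.

Definition cg (M : Foam0 C) X := \sum_(b : pt M) sgi (@sgn C M b) * ind (@obj C M b) X.

Definition empty0 : Foam0 C :=
  @Build_Foam0 C void (fun v => match v with end) (fun v => match v with end).

Lemma cg_empty X : cg empty0 X = 0.
Proof. by rewrite /cg big1 // => -[]. Qed.

Lemma cg_union M N X : cg (unionF0 M N) X = cg M X + cg N X.
Proof. by rewrite /cg big_sumType. Qed.

Lemma cg_neg M X : cg (negF0 M) X = - cg M X.
Proof.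
rewrite /cg -sumrN; apply: eq_bigr => b _ /=.
by case: (@sgn C M b); rewrite /sgi /= ?mulN1r ?mul1r ?opprK.
Qed.

Lemma K0eqE s t : K0eq s t <-> inK (fun X => coef s X - coef t X).
Proof. by []. Qed.

Lemma isomorphic_refl (X : Obj C) : isomorphic X X.
Proof. by exists (idm X), (idm X); rewrite Defs.comp1m. Qed.

Lemma isomorphic_sym (X Y : Obj C) : isomorphic X Y -> isomorphic Y X.
Proof. by move=> [f [g [H1 H2]]]; exists g, f. Qed.

Lemma isomorphic_trans (X Y Z : Obj C) :
  isomorphic X Y -> isomorphic Y Z -> isomorphic X Z.
Proof.
move=> [f [fi [H1 H2]]] [g [gi [G1 G2]]].
exists (Defs.comp g f), (Defs.comp fi gi); split.
- by rewrite Defs.compA -(Defs.compA fi gi g) G1 Defs.compm1.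
- by rewrite Defs.compA -(Defs.compA g f fi) H2 Defs.compm1.
Qed.

Lemma iso0_eq (M N : Foam0 C) (phi : pt M -> pt N) (psi : pt N -> pt M) :
  cancel phi psi -> cancel psi phi ->
  (forall b, @sgn C N (phi b) = @sgn C M b) -> (forall b, @obj C N (phi b) = @obj C M b) ->
  iso0 M N.
Proof.
move=> c1 c2 Hs Ho; exists phi; split; first by exists psi.
by move=> b; split => //; rewrite Ho; apply: isomorphic_refl.
Qed.

Lemma cg_eq (M N : Foam0 C) (phi : pt M -> pt N) (psi : pt N -> pt M) :
  cancel phi psi -> cancel psi phi ->
  (forall b, @sgn C N (phi b) = @sgn C M b) -> (forall b, @obj C N (phi b) = @obj C M b) ->
  forall X, cg N X = cg M X.
Proof.
move=> c1 c2 Hs Ho X; rewrite /cg (reindex phi); last first.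
  by apply: onW_bij; exists psi.
by apply: eq_big => // b _; rewrite Hs Ho.
Qed.

Lemma iso0_refl M : iso0 M M.
Proof. by apply: (@iso0_eq _ _ id id). Qed.

Lemma iso0_sym M N : iso0 M N -> iso0 N M.
Proof.
move=> [phi [[psi c1 c2] H]]; exists psi; split; first by exists phi.
move=> b; have [Hs Ho] := H (psi b); rewrite c2 in Hs Ho.
by split => //; apply: isomorphic_sym.
Qed.

Lemma iso0_trans M N P : iso0 M N -> iso0 N P -> iso0 M P.
Proof.
move=> [phi [Bphi H]] [chi [Bchi G]]; exists (chi \o phi); split.
  exact: bij_comp.
move=> b; have [Hs Ho] := H b; have [Gs Go] := G (phi b).
by split; [rewrite /= Gs | apply: isomorphic_trans Go].
Qed.

Lemma iso0_union (M M' N N' : Foam0 C) : iso0 M M' -> iso0 N N' ->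
  iso0 (unionF0 M N) (unionF0 M' N').
Proof.
move=> [phi [[phi' p1 p2] H]] [chi [[chi' q1 q2] G]].
exists (fun x => match x with inl a => inl (phi a) | inr b => inr (chi b) end).
split.
  exists (fun x => match x with inl a => inl (phi' a) | inr b => inr (chi' b) end).
    by case=> a /=; rewrite ?p1 ?q1.
  by case=> a /=; rewrite ?p2 ?q2.
by case=> a /=; [apply: H | apply: G].
Qed.

Lemma iso0_neg M N : iso0 M N -> iso0 (negF0 M) (negF0 N).
Proof.
move=> [phi [B H]]; exists phi; split => // b.
by have [Hs Ho] := H b; split => //=; rewrite Hs.
Qed.

Lemma iso0_comm M N : iso0 (unionF0 M N) (unionF0 N M).
Proof.
apply: (@iso0_eq (unionF0 M N) (unionF0 N M) (fun x => match x with inl a => inr a | inr b => inl b end)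
          (fun x => match x with inl a => inr a | inr b => inl b end)); by case.
Qed.

Lemma iso0_assoc M N P : iso0 (unionF0 (unionF0 M N) P) (unionF0 M (unionF0 N P)).
Proof.
apply: (@iso0_eq (unionF0 (unionF0 M N) P) (unionF0 M (unionF0 N P))
  (fun x => match x with inl (inl a) => inl a | inl (inr b) => inr (inl b)
                      | inr c => inr (inr c) end)
  (fun x => match x with inl a => inl (inl a) | inr (inl b) => inl (inr b)
                      | inr (inr c) => inr c end)); by do ![case].
Qed.

Lemma iso0_unitl M : iso0 (unionF0 empty0 M) M.
Proof.
apply: (@iso0_eq (unionF0 empty0 M) M (fun x => match x with inl a => match a with end | inr b => b end)
          (fun x => inr x)) => //; by case=> [[]|].
Qed.

Lemma iso0_negU M N : iso0 (negF0 (unionF0 M N)) (unionF0 (negF0 M) (negF0 N)).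
Proof. by apply: (@iso0_eq (negF0 (unionF0 M N)) (unionF0 (negF0 M) (negF0 N)) id id) => //; case. Qed.


Lemma iso0_inK M N : (exists Z, zeroobj Z) -> iso0 M N -> inK (fun X => cg M X - cg N X).
Proof.
move=> HZ [phi [Bphi H]].
have E : forall X, cg N X = \sum_(b : pt M) sgi (sgn b) * ind (obj (phi b)) X.
  move=> X; rewrite /cg (reindex phi); last exact: onW_bij.
  by apply: eq_bigr => b _; rewrite (proj1 (H b)).
apply: (inK_ext (f := fun X => \sum_(b : pt M) sgi (sgn b) * (ind (obj b) X - ind (obj (phi b)) X))).
  by move=> X; rewrite E /cg -sumrB; apply: eq_bigr => b _; rewrite mulrBr.
apply: inK_sum => b; apply: inK_mul; apply: inK_iso => //; exact: (proj2 (H b)).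
Qed.

Definition E0 : Foam1 C :=
  @Build_Foam1 C void void void (fun v => match v with end) (fun v => match v with end)
    (fun v => match v with end) (fun _ => None) (fun v => match v with end)
    (fun v => match v with end) (fun v => match v with end) (fun v => match v with end)
    (fun v => match v with end) (fun v => match v with end).

Lemma E0_cob : cobordism empty0 empty0.
Proof.
exists E0.
apply: (@iso0_eq (bdry E0) (unionF0 empty0 (negF0 empty0))
          (fun x => match (val x).1 with end)
          (fun y => match y with inl v => match v with end | inr v => match v with end end)).
- by case=> [[[] ]].
- by case=> [[]|[]].
- by case=> [[[] ]].
- by case=> [[[] ]].
Qed.


Section Ext.
Variables (U : Foam1 C) (W : Foam0 C).

Definition xE := (fE U + pt W)%type.
Definition xefib (e : xE) : Obj C := match e with inl e => efib e | inr w => obj w end.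
Definition xendpt (x : xE * bool) : option (fV U) :=
  match x.1 with inl e => endpt (e, x.2) | inr _ => None end.
Definition xlift (p : fE U * bool) : xE * bool := (inl p.1, p.2).

Lemma xlift_inj : injective xlift.
Proof. by move=> [a b] [a' b'] [-> ->]. Qed.

Lemma xvends v : vends (vin v) (inl (vfirst v) : xE) (inl (vsecond v)) (inl (vthick v))
   = map xlift (vends (vin v) (vfirst v) (vsecond v) (vthick v)).
Proof. by rewrite /vends; case: (vin v). Qed.

Lemma xvinc v :
  uniq (vends (vin v) (inl (vfirst v) : xE) (inl (vsecond v)) (inl (vthick v))) /\
  forall x, (xendpt x == Some v) =
    (x \in vends (vin v) (inl (vfirst v) : xE) (inl (vsecond v)) (inl (vthick v))).
Proof.
have [U1 U2] := vinc v.
rewrite xvends; split; first by rewrite (map_inj_uniq xlift_inj).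
case=> [[e|w] b].
  by rewrite -[(inl e, b)]/(xlift (e, b)) (mem_map xlift_inj) -U2.
rewrite /xendpt /=; apply/esym/mapP => -[[e b'] _ ] //.
Qed.

Definition extF : Foam1 C :=
  @Build_Foam1 C (fE U + pt W)%type (fV U) (fCir U) xefib (@cfib C U) (@cmono C U)
    xendpt (@vin C U) (fun v => inl (vfirst v)) (fun v => inl (vsecond v))
    (fun v => inl (vthick v)) xvinc (@vses C U).

Definition xphi (x : pt (bdry extF)) : pt (unionF0 (bdry U) (unionF0 W (negF0 W))) :=
  match x with
  | exist (inl e, b) p => inl (exist (fun y : fE U * bool => endpt y == None) (e, b) p)
  | exist (inr w, b) _ => inr (if b == sgn w then inl w else inr w)
  end.

Definition xpsi (y : pt (unionF0 (bdry U) (unionF0 W (negF0 W)))) : pt (bdry extF) :=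
  match y with
  | inl (exist (e, b) p) => exist (fun x : xE * bool => xendpt x == None) (inl e, b) p
  | inr (inl w) => exist (fun x : xE * bool => xendpt x == None) (inr w, @sgn C W w) (eqxx None)
  | inr (inr w) => exist (fun x : xE * bool => xendpt x == None) (inr w, ~~ @sgn C W w) (eqxx None)
  end.

Lemma ext_iso : iso0 (bdry extF) (unionF0 (bdry U) (unionF0 W (negF0 W))).
Proof.
apply: (@iso0_eq _ _ xphi xpsi).
- case=> [[[e|w] b] p] //=; case: ifP => [/eqP Eb|/negbT H]; apply: val_inj => /=.
    by rewrite Eb.
  by move: H; case: b {p}; case: (sgn w).
- case=> [[[e b] p]|[w|w]] //=; first by rewrite eqxx.
  by case: (@sgn C W w).
- case=> [[[e|w] b] p] //=; case: ifP => [/eqP ->|/negbT] //=.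
  by case: b {p}; case: (sgn w).
- by case=> [[[e|w] b] p] //=; case: ifP.
Qed.

End Ext.


Lemma iso0_shuffle (A B D E : Foam0 C) :
  iso0 (unionF0 (unionF0 A B) (unionF0 D E)) (unionF0 (unionF0 A D) (unionF0 B E)).
Proof.
apply: (@iso0_eq (unionF0 (unionF0 A B) (unionF0 D E)) (unionF0 (unionF0 A D) (unionF0 B E))
  (fun x => match x with inl (inl a) => inl (inl a) | inl (inr b) => inr (inl b)
     | inr (inl d) => inl (inr d) | inr (inr e) => inr (inr e) end)
  (fun x => match x with inl (inl a) => inl (inl a) | inr (inl b) => inl (inr b)
     | inl (inr d) => inr (inl d) | inr (inr e) => inr (inr e) end));
 by do 2![case].
Qed.

Lemma iso0_unitr M : iso0 M (unionF0 M (negF0 empty0)).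
Proof.
apply: (@iso0_eq M (unionF0 M (negF0 empty0)) inl
   (fun x => match x with inl a => a | inr v => match v with end end)) => //.
by case=> [|[]].
Qed.

Lemma cob_iso (A0 A1 B0 B1 : Foam0 C) : cobordism A0 A1 ->
  iso0 (unionF0 A1 (negF0 A0)) (unionF0 B1 (negF0 B0)) -> cobordism B0 B1.
Proof. by move=> [U HU] H; exists U; apply: iso0_trans H. Qed.

Lemma cob_ext (M0 M1 W : Foam0 C) : cobordism M0 M1 -> cobordism (unionF0 M0 W) (unionF0 M1 W).
Proof.
move=> [U HU]; exists (extF U W).
apply: iso0_trans (ext_iso U W) _.
apply: iso0_trans (iso0_union HU (iso0_refl _)) _.
apply: iso0_trans (iso0_shuffle _ _ _ _) _.
apply: iso0_union; first exact: iso0_refl.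
exact: iso0_sym (iso0_negU _ _).
Qed.

Lemma cobE_iso M N : iso0 M N -> cob_eq M N.
Proof.
move=> H; apply: rst_step.
apply: cob_iso (cob_ext M E0_cob) _.
apply: iso0_union.
  exact: iso0_trans (iso0_unitl M) H.
exact: iso0_neg (iso0_unitl M).
Qed.

Lemma cobE_sym M N : cob_eq M N -> cob_eq N M.
Proof. exact: rst_sym. Qed.

Lemma cobE_trans M N P : cob_eq M N -> cob_eq N P -> cob_eq M P.
Proof. exact: rst_trans. Qed.

Lemma cobE_cong M N W : cob_eq M N -> cob_eq (unionF0 M W) (unionF0 N W).
Proof.
elim=> [A B H|A|A B _ IH|A B D _ IH1 _ IH2].
- by apply: rst_step; apply: cob_ext.
- exact: rst_refl.
- exact: rst_sym.
- exact: rst_trans IH1 IH2.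
Qed.

Lemma cobE_congr M N W : cob_eq M N -> cob_eq (unionF0 W M) (unionF0 W N).
Proof.
move=> H; apply: cobE_trans (cobE_iso (iso0_comm _ _)) _.
apply: cobE_trans (cobE_cong W H) _.
exact: cobE_iso (iso0_comm _ _).
Qed.

Lemma cobE_zero (Z W : Foam0 C) : cob_eq Z empty0 -> cob_eq (unionF0 Z W) W.
Proof.
move=> H; apply: cobE_trans (cobE_cong W H) _.
exact: cobE_iso (iso0_unitl W).
Qed.

Lemma cob_cancel N : cob_eq (unionF0 N (negF0 N)) empty0.
Proof.
apply: rst_sym; apply: rst_step.
apply: cob_iso (cob_ext N E0_cob) _.
apply: iso0_trans (iso0_unitr _).
apply: iso0_union; first exact: iso0_unitl.
exact: iso0_neg (iso0_unitl N).
Qed.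


Section Vertex.
Variable d : SESdata C.

Definition vefib (e : option bool) : Obj C :=
  match e with Some true => sX1 d | Some false => sX3 d | None => sX2 d end.
Definition vendpt (x : option bool * bool) : option unit :=
  match x with (Some _, true) => Some tt | (None, false) => Some tt | _ => None end.

Lemma vvinc (v : unit) :
  uniq (vends true (Some true) (Some false) None) /\
  forall x, (vendpt x == Some v) = (x \in vends true (Some true) (Some false) None).
Proof. by case: v; split => // -[[[]|] []]. Qed.

Definition VF : Foam1 C :=
  @Build_Foam1 C (option bool) unit void vefib (fun v => match v with end)
    (fun v => match v with end) vendpt (fun _ => true) (fun _ => Some true)
    (fun _ => Some false) (fun _ => None) vvinc
    (fun _ => existT _ (sf d) (exist _ (sg d) (sP d))).

Definition TF : Foam0 C :=
  @Build_Foam0 C (option bool) (fun e => if e is None then true else false) vefib.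

Lemma cg_TF X : cg TF X = relelt d X.
Proof.
rewrite /cg (bigD1 None) // (bigD1 (Some true)) // (bigD1 (Some false)) //=.
rewrite big1 ?addr0; last by case=> [[]|].
by rewrite /relelt /sgi /=; ring.
Qed.

Definition vpsi (y : pt (unionF0 TF (negF0 empty0))) : pt (bdry VF) :=
  match y with
  | inl (Some true) => exist (fun x : option bool * bool => vendpt x == None) (Some true, false) (eqxx None)
  | inl (Some false) => exist (fun x : option bool * bool => vendpt x == None) (Some false, false) (eqxx None)
  | inl None => exist (fun x : option bool * bool => vendpt x == None) (None, true) (eqxx None)
  | inr v => match v with end
  end.

Lemma VF_cob : cobordism empty0 TF.
Proof.
exists VF.
apply: (@iso0_eq (bdry VF) (unionF0 TF (negF0 empty0)) (fun x => inl (val x).1) vpsi).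
- by case=> [[[[]|] []] p] //; apply: val_inj.
- by case=> [[[]|]|[]].
- by case=> [[[[]|] []] p].
- by case=> [[[[]|] []] p].
Qed.
End Vertex.

Lemma TF_cob d : cob_eq (TF d) empty0.
Proof. exact/rst_sym/rst_step/VF_cob. Qed.

Lemma negTF_cob d : cob_eq (negF0 (TF d)) empty0.
Proof.
apply: cobE_trans (cobE_iso (iso0_sym (iso0_unitl _))) _.
apply: cobE_trans (cobE_cong _ (cobE_sym (TF_cob d))) _.
exact: cob_cancel.
Qed.

Fixpoint rep (n : nat) (F : Foam0 C) : Foam0 C :=
  match n with 0 => empty0 | n.+1 => unionF0 F (rep n F) end.

Lemma cg_rep n F X : cg (rep n F) X = cg F X *+ n.
Proof. by elim: n => [|n IH] /=; rewrite ?cg_empty // cg_union IH mulrS. Qed.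

Lemma rep_cob n F : cob_eq F empty0 -> cob_eq (rep n F) empty0.
Proof.
move=> H; elim: n => [|n IH] /=; first exact: rst_refl.
exact: cobE_trans (cobE_zero _ H) IH.
Qed.

Lemma signrep (k x : int) : (sgi (0 <= k) * x) *+ `|k|%N = k * x.
Proof.
case: k => n /=.
  by rewrite mul1r -mulr_natl natz.
by rewrite NegzE mulN1r -mulr_natl natz mulrN mulNr.
Qed.

Definition blk (q : int * SESdata C) : Foam0 C :=
  rep `|q.1|%N (if 0 <= q.1 then TF q.2 else negF0 (TF q.2)).

Definition RF (r : seq (int * SESdata C)) : Foam0 C :=
  foldr (fun q acc => unionF0 (blk q) acc) empty0 r.

Lemma cg_RF r X : cg (RF r) X = \sum_(q <- r) q.1 * relelt q.2 X.
Proof.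
elim: r => [|q r IH] /=; first by rewrite cg_empty big_nil.
rewrite big_cons cg_union IH /blk cg_rep -signrep; congr (_ *+ _ + _).
by case: ifP => _; rewrite ?cg_neg cg_TF /sgi ?mul1r ?mulN1r.
Qed.

Lemma RF_cob r : cob_eq (RF r) empty0.
Proof.
elim: r => [|q r IH] /=; first exact: rst_refl.
apply: cobE_trans (cobE_zero _ _) IH.
apply: rep_cob; case: ifP => _; [exact: TF_cob | exact: negTF_cob].
Qed.

Definition pt1 (b : bool) (X : Obj C) : Foam0 C :=
  @Build_Foam0 C unit (fun _ => b) (fun _ => X).

Lemma cg_pt1 b X Y : cg (pt1 b X) Y = sgi b * ind X Y.
Proof. rewrite /cg (bigD1 tt) // big1 /=; first by rewrite addr0.
by case. Qed.

Definition SF (s : seq (int * Obj C)) : Foam0 C :=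
  foldr (fun p acc => unionF0 (rep `|p.1|%N (pt1 (0 <= p.1) p.2)) acc) empty0 s.

Lemma cg_SF s X : cg (SF s) X = coef s X.
Proof.
elim: s => [|p s IH] /=; first by rewrite cg_empty /coef big_nil.
by rewrite /coef big_cons -/(coef s X) cg_union IH cg_rep cg_pt1 signrep.
Qed.


Definition subF (P : Foam0 C) (A : pred (pt P)) : Foam0 C :=
  @Build_Foam0 C {: {x : pt P | A x}} (fun x => sgn (val x)) (fun x => obj (val x)).

Lemma ind_ge0 (A X : Obj C) : 0 <= ind A X.
Proof. by rewrite /ind; case: pselect. Qed.

Lemma ind_eq (A : Obj C) : ind A A = 1.
Proof. by rewrite /ind; case: pselect. Qed.

Lemma ind_neq (A X : Obj C) : A <> X -> ind A X = 0.
Proof. by rewrite /ind; case: pselect. Qed.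

Lemma empty_cob (P : Foam0 C) : (@predT (pt P)) =1 xpred0 -> cob_eq P empty0.
Proof.
move=> Hn0; apply: cobE_iso.
apply: (@iso0_eq P empty0 (fun x => match Bool.diff_true_false (Hn0 x) with end)
         (fun v => match v with end)).
- by move=> x; case: (Bool.diff_true_false (Hn0 x)).
- by case.
- by move=> x; case: (Bool.diff_true_false (Hn0 x)).
- by move=> x; case: (Bool.diff_true_false (Hn0 x)).
Qed.

Lemma zero_cob n : forall P : Foam0 C, (#|pt P| <= n)%N -> (forall X, cg P X = 0) ->
  cob_eq P empty0.
Proof.
elim: n => [|n IH] P Hn H0; case: (pickP (@predT (pt P))) => [b _|Hn0];
  try exact: empty_cob Hn0.
  have Hc : (0 < #|pt P|)%N by apply/card_gt0P; exists b.
  by rewrite leqn0 in Hn; rewrite (eqP Hn) in Hc.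
have [b' [Ob' Sb']] : exists b' : pt P, obj b' = obj b /\ sgn b' = ~~ sgn b.
  case: (pselect (exists b' : pt P, obj b' = obj b /\ sgn b' = ~~ sgn b)) => // Hno.
  exfalso.
  have Hall : forall b' : pt P, sgi (sgn b) * (sgi (sgn b') * ind (obj b') (obj b))
                        = ind (obj b') (obj b).
    move=> b'; case: (pselect (obj b' = obj b)) => [E|E]; last first.
      by rewrite ind_neq // !mulr0.
    have Es : sgn b' = sgn b.
      case E2: (sgn b' == sgn b); first exact/eqP.
      exfalso; apply: Hno; exists b'; split => //.
      by move: E2; case: (sgn b'); case: (sgn b).
    by rewrite E Es ind_eq; case: (sgn b).
  have := H0 (obj b); rewrite /cg => Hs.
  have : sgi (sgn b) * \sum_(b' : pt P) sgi (sgn b') * ind (obj b') (obj b) = 0.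
    by rewrite Hs mulr0.
  rewrite mulr_sumr (eq_bigr _ (fun b' _ => Hall b')) (bigD1 b) //= ind_eq.
  have : 0 <= \sum_(i | i != b) ind (obj i) (obj b).
    by apply: Num.Theory.sumr_ge0 => i _; apply: ind_ge0.
  move: (\sum_(i | i != b) ind (obj i) (obj b)) => t; lia.
have Nb : b' != b by apply/eqP => E; move: Sb'; rewrite E; case: (sgn b).
pose A := fun x : pt P => (x != b) && (x != b').
pose P' := subF A.
pose N := pt1 (sgn b) (obj b).
pose phi : pt (unionF0 P' (unionF0 N (negF0 N))) -> pt P :=
  fun x => match x with inl y => val y | inr (inl _) => b | inr (inr _) => b' end.
pose psi : pt P -> pt (unionF0 P' (unionF0 N (negF0 N))) :=
  fun x => match insub x with Some y => inl y
           | None => if x == b then inr (inl tt) else inr (inr tt) end.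
have c1 : cancel phi psi.
  case=> [y|[[]|[]]] /=; rewrite /psi.
  - by rewrite valK.
  - by rewrite insubF ?eqxx // /A eqxx.
  - by rewrite insubF ?(negbTE Nb) // /A eqxx andbF.
have c2 : cancel psi phi.
  move=> x; rewrite /psi; case: insubP => [y _ Ey|] //=.
  rewrite /A negb_and !negbK; case/orP => /eqP ->; first by rewrite eqxx.
  by rewrite (negbTE Nb).
have Hs : forall z, sgn (phi z) = sgn z by case=> [y|[[]|[]]].
have Ho : forall z, obj (phi z) = obj z by case=> [y|[[]|[]]].
have Hiso := iso0_eq c1 c2 Hs Ho.
have Hcg := cg_eq c1 c2 Hs Ho.
have H0' : forall X, cg P' X = 0.
  move=> X; have := Hcg X; rewrite H0 !cg_union cg_neg subrr addr0.
  by move->.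
have Hc' : (#|pt P'| <= n)%N.
  have HA : (#|A| <= #|predC1 b|)%N.
    by apply: subset_leq_card; apply/subsetP => x; rewrite !inE /A => /andP[].
  have Hb : (0 < #|pt P|)%N by apply/card_gt0P; exists b.
  rewrite cardC1 in HA.
  rewrite /= card_sig.
  have -> : #|[pred x | A x]| = #|A| by apply: eq_card.
  lia.
apply: cobE_trans (cobE_iso (iso0_sym Hiso)) _.
apply: cobE_trans (cobE_zero _ (IH P' Hc' H0')) _.
exact: cob_cancel.
Qed.


Definition dv (U : Foam1 C) (v : fV U) : SESdata C :=
  Build_SESdata (proj2_sig (projT2 (vses v))).

Lemma bdry_inK (U : Foam1 C) : inK (cg (bdry U)).
Proof.
pose F X (x : fE U * bool) := sgi x.2 * ind (efib x.1) X.
have S1 : forall X, cg (bdry U) X = \sum_(x | endpt x == None) F X x.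
  move=> X; rewrite [RHS](@reindex_omap _ _ _ _ (pt (bdry U)) val insub); last first.
    by move=> i Hi; rewrite insubT.
  rewrite /cg; apply: eq_big => // y.
  by rewrite (valP y) valK eqxx.
have S2 : forall X, \sum_x F X x = 0.
  move=> X; have -> : \sum_x F X x = \sum_e \sum_b F X (e, b).
    by rewrite pair_big; apply: eq_big => // -[].
  by rewrite big1 // => e _; rewrite big_bool /F /sgi /=; ring.
have S3 : forall X, \sum_x F X x = \sum_(x | endpt x == None) F X x +
     \sum_v \sum_(x <- vends (vin v) (vfirst v) (vsecond v) (vthick v)) F X x.
  move=> X.
  have -> : \sum_x F X x = \sum_x ((if endpt x == None then F X x else 0) +
                \sum_v (if endpt x == Some v then F X x else 0)).
    apply: eq_bigr => x _; case: (endpt x) => [w|] /=.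
      rewrite (bigD1 w) //= eqxx big1 ?add0r ?addr0 // => v /negbTE.
      by move=> H; case: eqP => // -[E]; rewrite E eqxx in H.
    by rewrite big1 ?addr0.
  rewrite big_split /= -big_mkcond exchange_big /=; congr (_ + _).
  apply: eq_bigr => v _; rewrite -big_mkcond.
  have [U1 U2] := vinc v.
  by rewrite (big_uniq _ U1); apply: eq_bigl => x; rewrite U2.
have S4 : forall X v, \sum_(x <- vends (vin v) (vfirst v) (vsecond v) (vthick v)) F X x
     = - (sgi (vin v) * relelt (dv v) X).
  move=> X v; rewrite /vends /relelt /=.
  by case: (vin v); rewrite !big_cons big_nil /F /sgi /=; ring.
apply: (inK_ext (f := fun X => \sum_v sgi (vin v) * relelt (dv v) X)).
  move=> X; rewrite S1; have := S2 X; rewrite S3.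
  rewrite (eq_bigr _ (fun v _ => S4 X v)) sumrN.
  by move/eqP; rewrite subr_eq0 => /eqP ->.
by apply: inK_sum => v; apply: inK_mul; apply: inK_rel.
Qed.

End K.

Theorem mainTheorem3 (C : PreAddCat) (HC : is_abelian C) :
  (* well-defined on Cob_0 *)
  (forall M N : Foam0 C, cob_eq M N -> K0eq (gamma M) (gamma N)) /\
  (* additive: disjoint union goes to sum *)
  (forall M N : Foam0 C, K0eq (gamma (unionF0 M N)) (gamma M ++ gamma N)) /\
  (* injective on Cob_0 *)
  (forall M N : Foam0 C, K0eq (gamma M) (gamma N) -> cob_eq M N) /\
  (* surjective onto K_0 *)
  (forall s : seq (int * Obj C), exists M : Foam0 C, K0eq (gamma M) s).
Proof.
have HZ : exists Z : Obj C, zeroobj Z by case: HC => [[Z HZ] _]; exists Z.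
split; [|split; [|split]].
- move=> M N; elim=> [A B [U HU]|A|A B _ IH|A B D _ IH1 _ IH2].
  + have h1 := iso0_inK HZ HU; have h2 := bdry_inK U.
    apply/K0eqE; apply: inK_ext (inKB h1 h2) => X /=.
    rewrite !cgE -/(cg A X) -/(cg B X).
    rewrite cg_union cg_neg; ring.
  + by apply/K0eqE; apply: inK_ext (inK0 C) => X; rewrite subrr.
  + by apply/K0eqE; apply: inK_ext (inKN IH) => X; rewrite opprB.
  + by apply/K0eqE; apply: inK_ext (inKD IH1 IH2) => X; rewrite addrA subrK.
- move=> M N; apply/K0eqE; apply: inK_ext (inK0 C) => X.
  rewrite /coef big_cat /= -!/(coef _ X) !cgE -/(cg M X) -/(cg N X).
  by rewrite -/(cg (unionF0 M N) X) cg_union subrr.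
- move=> M N [r Hr].
  pose Q := unionF0 N (RF r).
  pose P := unionF0 M (negF0 Q).
  have HP : cob_eq P (empty0 C).
    apply: (@zero_cob _ #|pt P|) => // X.
    rewrite /P /Q !cg_union cg_neg cg_union cg_RF.
    have := Hr X; rewrite !cgE -/(cg M X) -/(cg N X) => E.
    by rewrite opprD addrA E subrr.
  apply: cobE_trans (_ : cob_eq M (unionF0 M (unionF0 Q (negF0 Q)))) _.
    apply: cobE_sym; apply: cobE_trans (cobE_congr M (cob_cancel Q)) _.
    by apply: cobE_iso; exact: iso0_trans (iso0_comm _ _) (iso0_unitl _).
  apply: cobE_trans (cobE_iso (iso0_trans (iso0_union (iso0_refl M) (iso0_comm _ _))
                                       (iso0_sym (iso0_assoc _ _ _)))) _.
  apply: cobE_trans (cobE_zero _ HP) _.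
  apply: cobE_trans (cobE_congr N (RF_cob r)) _.
  by apply: cobE_iso; exact: iso0_trans (iso0_comm _ _) (iso0_unitl _).
- move=> s; exists (SF s); apply/K0eqE; apply: inK_ext (inK0 C) => X.
  by rewrite cgE -/(cg (SF s) X) cg_SF subrr.
Qed.
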